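(* Let $G$ be a topological group and let $X$ be a $G$-Banach space, i.e. a (real) Banach space equipped with a continuous action of $G$ by linear isometries. Then there exists an equivalent norm $\|\cdot\|'$ on $X$ that is strictly convex and $G$-invariant (i.e. $\|g\cdot x\|'=\|x\|'$ for all $g\in G$, $x\in X$) if and only if there exist a strictly convex $G$-Banach space $Y$ and a bounded injective $G$-equivariant linear operator from $X$ to $Y$.
   Context: A linear operator $\phi:X\to Y$ between $G$-Banach spaces is $G$-equivariant if $\phi(g\cdot x)=g\cdot\phi(x)$ for all $g\in G$, $x\in X$. A norm $\|\cdot\|$ is strictly convex if for every $x\neq y$ with $\|x\|=\|y\|$ one has $\|\frac{x+y}{2}\|<\|x\|$. *)

(* Defs.v *)
From HB Require Import structures.
From mathcomp Require Import all_boot all_order all_algebra.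
From mathcomp Require Import all_classical all_reals all_analysis.
Set Implicit Arguments. Unset Strict Implicit. Unset Printing Implicit Defensive.
Import Order.TTheory GRing.Theory Num.Theory.
Import numFieldNormedType.Exports.
Local Open Scope ring_scope.

Definition topological_group (G : topologicalType)
  (mul : G -> G -> G) (inv : G -> G) (one : G) : Prop :=
  [/\ (forall a b c, mul a (mul b c) = mul (mul a b) c),
      (forall a, mul one a = a /\ mul a one = a),
      (forall a, mul (inv a) a = one /\ mul a (inv a) = one),
      continuous (fun p : G * G => mul p.1 p.2) &
      continuous inv].

Definition G_Banach_action (R : realType) (G : topologicalType)
  (mul : G -> G -> G) (one : G) (X : normedModType R) (act : G -> X -> X) : Prop :=
  [/\ (forall x, act one x = x),
      (forall g h x, act (mul g h) x = act g (act h x)),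
      (forall g, linear (act g)),
      (forall g x, `|act g x| = `|x|) &
      continuous (fun p : G * X => act p.1 p.2)].

Definition is_norm (R : realType) (X : lmodType R) (N : X -> R) : Prop :=
  [/\ (forall x, 0 <= N x),
      (forall x, N x = 0 -> x = 0),
      (forall (a : R) x, N (a *: x) = `|a| * N x) &
      (forall x y, N (x + y) <= N x + N y)].

Definition equivalent_norm (R : realType) (X : normedModType R) (N : X -> R) : Prop :=
  is_norm N /\ exists c C : R, [/\ 0 < c, 0 < C &
     forall x, c * `|x| <= N x /\ N x <= C * `|x|].

Definition strictly_convex (R : realType) (X : lmodType R) (N : X -> R) : Prop :=
  forall x y : X, x <> y -> N x = N y -> N (2^-1 *: (x + y)) < N x.

Definition G_invariant (R : realType) (G : Type) (X : Type)
  (act : G -> X -> X) (N : X -> R) : Prop :=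
  forall g x, N (act g x) = N x.

Definition G_equivariant (G X Y : Type) (actX : G -> X -> X) (actY : G -> Y -> Y)
  (phi : X -> Y) : Prop :=
  forall g x, phi (actX g x) = actY g (phi x).

Definition bounded_linear (R : realType) (X Y : normedModType R) (phi : X -> Y) : Prop :=
  linear phi /\ exists C : R, forall x, `|phi x| <= C * `|x|.

(* Main.v *)
Require Import Defs.
From HB Require Import structures.
From mathcomp Require Import all_boot all_order all_algebra.
From mathcomp Require Import all_classical all_reals all_analysis.
From mathcomp Require Import lra.
Import Order.TTheory GRing.Theory Num.Theory.
Import numFieldNormedType.Exports.
Local Open Scope ring_scope.

Definition ncopy (R : realType) (X : normedModType R) (N : X -> R)
  (hN : equivalent_norm N) : Type := X.
Arguments ncopy {R X N}.

Section Copy.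
Variables (R : realType) (X : normedModType R) (N : X -> R) (hN : equivalent_norm N).

HB.instance Definition _ := GRing.Lmodule.on (ncopy hN).

Let nD : forall x y : ncopy hN, N (x + y) <= N x + N y.
Proof. by case: hN => -[]. Qed.
Let nZ : forall (l : R) (x : ncopy hN), N (l *: x) = `|l| * N x.
Proof. by case: hN => -[]. Qed.
Let n0 : forall x : ncopy hN, N x = 0 -> x = 0.
Proof. by case: hN => -[]. Qed.

HB.instance Definition _ := Lmodule_isNormed.Build R (ncopy hN) nD nZ n0.

Lemma ncopy_normE (x : ncopy hN) : `|x| = N x.
Proof. by []. Qed.

Lemma nbhs_to_copy (x : X) (P : set X) : nbhs x P -> nbhs (x : ncopy hN) P.
Proof.
have [_ [c [C [c0 C0 hcC]]]] := hN.
move=> h; have := (@nbhs_normP R X x P).1 h. move=> [e e0 sP].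
apply/(@nbhs_normP R (ncopy hN) x P); exists (c * e); first exact: mulr_gt0.
move=> y /= hy; apply: sP => /=.
have := (hcC (x - y)).1; rewrite -(ltr_pM2l c0).
move=> h'; apply: (le_lt_trans h'); exact: hy.
Qed.

Lemma nbhs_from_copy (x : X) (P : set X) : nbhs (x : ncopy hN) P -> nbhs x P.
Proof.
have [_ [c [C [c0 C0 hcC]]]] := hN.
move=> h; have := (@nbhs_normP R (ncopy hN) x P).1 h. move=> [e e0 sP].
apply/(@nbhs_normP R X x P); exists (e / C); first exact: divr_gt0.
move=> y /= hy; apply: sP => /=.
rewrite /= ncopy_normE; apply: (le_lt_trans (hcC (x - y)).2).
by rewrite -ltr_pdivlMl // mulrC.
Qed.
End Copy.

Section CopyComplete.
Variables (R : realType) (X : completeNormedModType R) (N : X -> R) (hN : equivalent_norm N).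

Lemma ncopy_cauchy_cvg (F : set_system (ncopy hN)) : ProperFilter F -> cauchy F -> cvg F.
Proof.
move=> FF /cauchy_ballP cF.
have cX : cauchy (F : set_system X).
  apply/cauchy_ballP => e e0.
  have [_ [c [C [c0 C0 hcC]]]] := hN.
  have := cF (c * e) (mulr_gt0 c0 e0).
  apply: filterS => -[a b] /=; rewrite -!ball_normE /= ncopy_normE => h.
  have := (hcC (a - b)).1; rewrite -(ltr_pM2l c0) => h'.
  exact: le_lt_trans h' h.
have Fl := cauchy_cvg (F : set_system X) cX; set l := lim _ in Fl.
apply/cvg_ex; exists (l : ncopy hN).
move=> P /nbhs_from_copy hP; exact: Fl.
Qed.

HB.instance Definition _ := Uniform_isComplete.Build (ncopy hN) ncopy_cauchy_cvg.
End CopyComplete.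

Section Lin.
Variables (R : realType) (X Y : normedModType R) (phi : X -> Y).
Hypothesis lin : linear phi.
Lemma lin0 : phi 0 = 0.
Proof.
have := lin 1 0 0; rewrite !scale1r addr0 => h.
by apply/(addrI (phi 0)); rewrite addr0 -h.
Qed.
Lemma linZ a x : phi (a *: x) = a *: phi x.
Proof. by have := lin a x 0; rewrite !addr0 lin0 addr0. Qed.
Lemma linD x y : phi (x + y) = phi x + phi y.
Proof. by have := lin 1 x y; rewrite !scale1r. Qed.
End Lin.
Arguments lin0 {R X Y phi}.
Arguments linZ {R X Y phi}.
Arguments linD {R X Y phi}.

Lemma sc_parallel (R : realType) (Y : normedModType R) :
  strictly_convex (fun y : Y => `|y|) -> forall a b : Y, a != 0 -> b != 0 ->
  `|a + b| = `|a| + `|b| -> b = (`|b| / `|a|) *: a.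
Proof.
move=> sc.
suff main : forall a b : Y, a != 0 -> b != 0 -> `|a| <= `|b| ->
    `|a + b| = `|a| + `|b| -> a = (`|a| / `|b|) *: b.
  move=> a b a0 b0 e.
  have na : 0 < `|a| by rewrite normr_gt0.
  have nb : 0 < `|b| by rewrite normr_gt0.
  case: (leP `|a| `|b|) => hab.
    rewrite {2}(main a b a0 b0 hab e) scalerA.
    rewrite mulrA divfK ?gt_eqF // divff ?gt_eqF // scale1r //.
  by apply: main => //; [exact: ltW | rewrite addrC e addrC].
move=> a b a0 b0 hab e.
have na : 0 < `|a| by rewrite normr_gt0.
have nb : 0 < `|b| by rewrite normr_gt0.
set k := `|a| / `|b|.
have k0 : 0 <= k by rewrite divr_ge0 // ltW.
have k1 : k <= 1 by rewrite ler_pdivrMr // mul1r.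
have nb' : `|k *: b| = `|a| by rewrite normrZ ger0_norm // divfK ?gt_eqF.
case: (eqVneq a (k *: b)) => [//|neq]; exfalso.
have neq' : a <> k *: b by apply/eqP.
have := sc a (k *: b) neq' (esym nb').
rewrite /= normrZ ger0_norm ?invr_ge0 ?ler0n // => hlt.
have : `|a + b| <= `|a + k *: b| + (1 - k) * `|b|.
  have -> : a + b = (a + k *: b) + (1 - k) *: b by rewrite scalerBl scale1r -addrA (addrC (k *: b)) subrK.
  by apply: (le_trans (ler_normD _ _)); rewrite normrZ ger0_norm // subr_ge0.
rewrite e mulrBl mul1r -/k.
have -> : k * `|b| = `|a| by rewrite divfK ?gt_eqF.
move: hlt; set z := `|a + k *: b| => hlt h.
have : 2 * `|a| <= z by lra.
lra.
Qed.

Arguments sc_parallel {R Y}.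

Theorem proposition3p1 (R : realType) (G : topologicalType)
  (mul : G -> G -> G) (inv : G -> G) (one : G)
  (X : completeNormedModType R) (act : G -> X -> X) :
  topological_group mul inv one ->
  G_Banach_action mul one act ->
  (exists N : X -> R,
      [/\ equivalent_norm N, strictly_convex N & G_invariant act N])
  <->
  (exists (Y : completeNormedModType R) (actY : G -> Y -> Y) (phi : X -> Y),
      [/\ G_Banach_action mul one actY,
          strictly_convex (fun y : Y => `|y|),
          bounded_linear phi,
          injective phi &
          G_equivariant act actY phi]).
Proof.
move=> _ [h1 h2 h3 h4 h5]; split.
  move=> [N [hN sc hinv]].
  exists (ncopy hN), act, id.
  have [_ [c [C [c0 C0 hcC]]]] := hN.
  split.
  - split => //.
    move=> p Q /nbhs_from_copy hQ.
    have := h5 p Q hQ.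
    case=> -[A B] /= [hA hB] sub.
    exists (A, B) => //; split => //.
    exact: nbhs_to_copy.
  - exact: sc.
  - split; first by [].
    by exists C => x; rewrite ncopy_normE; case: (hcC x).
  - by [].
  - by [].
move=> [Y [actY [phi [[a1 a2 a3 a4 a5] scY [lin [C hC]] inj eqv]]]].
have Nx0 : forall x, `|x| + `|phi x| = 0 -> x = 0.
  move=> x h; apply/normr0_eq0.
  have := normr_ge0 x; have := normr_ge0 (phi x); lra.
exists (fun x => `|x| + `|phi x|); split.
- split.
    split.
    + by move=> x; rewrite addr_ge0.
    + exact: Nx0.
    + by move=> a x; rewrite (linZ lin) !normrZ mulrDr.
    + move=> x y; rewrite (linD lin).
      have := ler_normD x y; have := ler_normD (phi x) (phi y); lra.
  exists 1, (1 + `|C|); split => //.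
  move=> x; split; first by rewrite mul1r lerDl.
  have := hC x; have := ler_norm C; have := normr_ge0 x; have := normr_ge0 (phi x); nra.
- move=> x y xy eN /=.
  rewrite (linZ lin) (linD lin) !normrZ ger0_norm ?invr_ge0 ?ler0n //.
  rewrite ltNge; apply/negP => hle.
  have t1 := ler_normD x y; have t2 := ler_normD (phi x) (phi y).
  have eq : `|phi x + phi y| = `|phi x| + `|phi y|.
    by apply: le_anti; apply/andP; split; [exact: t2 | lra].
  have px0 : phi x != 0.
    apply/eqP => h.
    have x0 : x = 0 by apply: inj; rewrite h (lin0 lin).
    apply: xy; rewrite x0; apply/esym/Nx0; rewrite -eN x0 (lin0 lin) !normr0 addr0 //.
  have py0 : phi y != 0.
    apply/eqP => h.
    have y0 : y = 0 by apply: inj; rewrite h (lin0 lin).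
    apply: xy; rewrite y0; apply/Nx0; rewrite eN y0 (lin0 lin) !normr0 addr0 //.
  have := sc_parallel scY _ _ px0 py0 eq.
  set t := `|phi y| / `|phi x| => hpy.
  have t0 : 0 <= t by rewrite divr_ge0.
  have yt : y = t *: x by apply: inj; rewrite (linZ lin).
  clearbody t.
  move: eN; rewrite yt (linZ lin) !normrZ ger0_norm // => eN.
  have hm : (t - 1) * (`|x| + `|phi x|) = 0.
    by rewrite mulrBl mul1r mulrDr -eN subrr.
  move/eqP: hm; rewrite mulf_eq0 => /orP[|/eqP hz].
    by rewrite subr_eq0 => /eqP t1'; apply: xy; rewrite yt t1' scale1r.
  by move: px0; rewrite -normr_eq0; have := normr_ge0 x; have := normr_ge0 (phi x); move: hz; clear; move=> hz ha hb /negP; apply; apply/eqP; lra.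
- by move=> g x /=; rewrite eqv a4 h4.
Qed.
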